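(* Let $0\le b<d\le n$ be integers and fix a homological degree. (1) If $\hat z$ is a relative cycle of the pair $\hat K(b,d]$ that contains a vertical cell $\tau\times\{d\}$ with $\min\tau=d$, then $[\hat z]\notin\operatorname{im}\big(H(\hat K(b,d-1])\to H(\hat K(b,d])\big)$. (2) If $\hat z$ is a relative cycle of the pair $\hat K[b,d)$ that contains a vertical cell $\tau\times\{b\}$ with $\max\tau=b$, then $[\hat z]\notin\operatorname{im}\big(H(\hat K[b+1,d))\to H(\hat K[b,d))\big)$. (3) If $\hat z$ is a cycle in $\hat K[b,d]=\hat K_b^d$ that contains vertical cells $\sigma\times\{b\}$ and $\tau\times\{d\}$ with $\max\sigma=b$ and $\min\tau=d$, then $[\hat z]\notin\operatorname{im}\big(H(\hat K[b+1,d])\to H(\hat K[b,d])\big)$ and $[\hat z]\notin\operatorname{im}\big(H(\hat K[b,d-1])\to H(\hat K[b,d])\big)$.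
   Context: Fix a field $\mathbb F$; all chains and homology groups have coefficients in $\mathbb F$. Let $n\ge 1$ and let $K$ be a finite $\Delta$-complex (distinct simplices may have the same boundary) in which every simplex $\sigma$ carries an integer interval $T(\sigma)=[\min\sigma,\max\sigma]\subseteq[0,n]$ with $\min\sigma<\max\sigma$, such that for each integer $i$ the set $K_i=\{\sigma: i\in T(\sigma)\}$ is a subcomplex (these form a zigzag $K_0\to K_1\leftarrow K_2\to\cdots$), and such that whenever $\sigma$ is a proper face of $\tau$ we have $\min\sigma<\min\tau<\max\tau<\max\sigma$. The prism $\hat K$ is the cell complex whose cells are the vertical cells $\sigma\times\{i\}$ for $\sigma\in K$ and integers $i\in T(\sigma)$ (of dimension $\dim\sigma$) and the horizontal cells $\sigma\times[i,i+1]$ for integers $i$ with $[i,i+1]\subseteq T(\sigma)$ (of dimension $\dim\sigma+1$), with boundary $\partial(\sigma\times\{i\})=(\partial\sigma)\times\{i\}$ and $\partial(\sigma\times[i,i+1])=(\partial\sigma)\times[i,i+1]+(-1)^{\dim\sigma}(\sigma\times\{i+1\}-\sigma\times\{i\})$ (terms not in $\hat K$ do not occur). For integers $i\le j$, $\hat K_i^j$ is the subcomplex of cells $\sigma\times T$ with $T\subseteq[i,j]$; so $\hat K_{-1}^{n+1}=\hat K$. For integers $b\le d$ define the pairs $\hat K[b,d]=(\hat K_b^d,\emptyset)$, $\hat K(b,d]=(\hat K_{-1}^d,\hat K_{-1}^b)$, $\hat K[b,d)=(\hat K_b^{n+1},\hat K_d^{n+1})$, $\hat K(b,d)=(\hat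 K,\hat K_{-1}^b\cup\hat K_d^{n+1})$, and write $H(\cdot)$ for their relative homology; maps between these groups are induced by inclusions of pairs. A relative cycle of a pair $(X,A)$ is a chain in $X$ whose boundary lies in $A$. A chain ''contains'' a cell if the cell's coefficient is nonzero. *)

(* Defs.v *)
From HB Require Import structures.
From mathcomp Require Import all_boot all_order all_algebra.
Import GRing.Theory Num.Theory.
Set Implicit Arguments. Unset Strict Implicit. Unset Printing Implicit Defensive.

(* A finite Delta-complex: simplices, dimensions, face maps d_j (j <= dim),
   together with the interval T(s) = [smin s, smax s]. *)
Record dcomplex := DComplex {
  simplex : finType;
  sdim : simplex -> nat;
  face : simplex -> nat -> simplex;
  smin : simplex -> nat;
  smax : simplex -> nat }.

Inductive proper_face (K : dcomplex) : simplex K -> simplex K -> Prop :=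
  | pf_face (t : simplex K) (j : nat) : (0 < sdim t)%N -> (j <= sdim t)%N -> proper_face (face t j) t
  | pf_trans (s r t : simplex K) : proper_face s r -> proper_face r t -> proper_face s t.

Definition valid (K : dcomplex) (n : nat) : Prop :=
  [/\
      forall (t : simplex K) j, (0 < sdim t)%N -> (j <= sdim t)%N ->
        sdim (face t j) = (sdim t).-1,
      forall (t : simplex K) i j, (1 < sdim t)%N -> (i < j)%N -> (j <= sdim t)%N ->
        face (face t j) i = face (face t i) j.-1,
      forall (t : simplex K), (smin t < smax t <= n)%N,
      (* each K_i is a subcomplex *)
      forall i (t : simplex K) j, (0 < sdim t)%N -> (j <= sdim t)%N ->
        (smin t <= i <= smax t)%N -> (smin (face t j) <= i <= smax (face t j))%N
    &
      forall s t : simplex K, proper_face s t ->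
        [/\ (smin s < smin t)%N, (smin t < smax t)%N & (smax t < smax s)%N] ].

(* cells of the prism: (s, i, false) = s x {i}, (s, i, true) = s x [i,i+1] *)
Definition cell (K : dcomplex) (n : nat) := (simplex K * 'I_n.+1 * bool)%type.

Definition inK (K : dcomplex) (n : nat) (e : cell K n) : bool :=
  let: (s, i, h) := e in
  if h then (smin s <= i)%N && (i.+1 <= smax s)%N
  else (smin s <= i <= smax s)%N.

Definition cdim (K : dcomplex) (n : nat) (e : cell K n) : nat :=
  let: (s, i, h) := e in if h then (sdim s).+1 else sdim s.

Local Open Scope ring_scope.

Definition facecoef (F : fieldType) (K : dcomplex) (t s : simplex K) : F :=
  if sdim t is 0 then 0
  else \sum_(j < (sdim t).+1) (-1) ^+ j * ((face t j == s)%:R).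

Definition inc (F : fieldType) (K : dcomplex) (n : nat) (e' e : cell K n) : F :=
  let: (t, i, h') := e' in
  let: (s, k, h) := e in
  match h', h with
  | false, false => (i == k)%:R * facecoef F t s
  | false, true => 0
  | true, true => (i == k)%:R * facecoef F t s
  | true, false =>
      (s == t)%:R * (-1) ^+ (sdim t)
        * (((val k == (val i).+1)%N)%:R - ((k == i)%:R))
  end.

Definition bd (F : fieldType) (K : dcomplex) (n : nat) (c : cell K n -> F)
  (e : cell K n) : F :=
  \sum_(e' : cell K n) c e' * inc F e' e.

Definition subcx (K : dcomplex) (n : nat) (lo hi : int) : pred (cell K n) :=
  fun e => inK e &&
    (let: (s, i, h) := e in
     (lo <= (val i)%:Z) && ((if h then ((val i).+1)%:Z else (val i)%:Z) <= hi)).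

Arguments subcx : clear implicits.

Definition nocell (K : dcomplex) (n : nat) : pred (cell K n) := fun _ => false.

Definition chain_in (F : fieldType) (K : dcomplex) (n : nat)
  (X : pred (cell K n)) (p : nat) (c : cell K n -> F) : Prop :=
  forall e, c e != 0 -> X e /\ cdim e = p.

Definition rel_cycle (F : fieldType) (K : dcomplex) (n : nat)
  (X A : pred (cell K n)) (p : nat) (z : cell K n -> F) : Prop :=
  chain_in X p z /\ (forall e, bd z e != 0 -> A e).

(* [z] lies in the image of H_p(X', A') -> H_p(X, A) (inclusion of pairs):
   z is homologous in (X, A) to a relative cycle of (X', A') *)
Definition in_image (F : fieldType) (K : dcomplex) (n : nat)
  (X' A' X A : pred (cell K n)) (p : nat) (z : cell K n -> F) : Prop :=
  exists (w c a : cell K n -> F),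
    [/\ rel_cycle X' A' p w, chain_in X p.+1 c, chain_in A p a
      & forall e, z e = w e + bd c e + a e].

Definition has_vert_min (F : fieldType) (K : dcomplex) (n : nat)
  (z : cell K n -> F) (k : nat) : Prop :=
  exists (t : simplex K) (i : 'I_n.+1), val i = k /\ smin t = k /\ z (t, i, false) != 0.

Definition has_vert_max (F : fieldType) (K : dcomplex) (n : nat)
  (z : cell K n -> F) (k : nat) : Prop :=
  exists (s : simplex K) (i : 'I_n.+1), val i = k /\ smax s = k /\ z (s, i, false) != 0.

Arguments nocell : clear implicits.

(* Main.v *)
Require Import Defs.
From mathcomp Require Import all_boot all_order all_algebra.
From mathcomp Require Import zify.
Import GRing.Theory Num.Theory.
Local Open Scope ring_scope.

Lemma vnat m (x : 'I_m) : \val x = nat_of_ord x. Proof. by []. Qed.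

Lemma chain0 (F : fieldType) (K : dcomplex) (n : nat) (X : pred (cell K n)) p
  (c : cell K n -> F) e : chain_in X p c -> ~~ X e -> c e = 0.
Proof.
move=> H nX; case: (eqVneq (c e) 0) => // /H [] Xe _.
by rewrite Xe in nX.
Qed.

Lemma bd_nz (F : fieldType) (K : dcomplex) (n : nat) (c : cell K n -> F) tau i0 :
  bd c (tau, i0, false) != 0 ->
  exists t i h, c (t, i, h) != 0 /\
   ((h = false /\ i = i0 /\ proper_face tau t) \/
    (h = true /\ t = tau /\ (val i0 = (val i).+1 \/ i0 = i))).
Proof.
move=> H.
have [[[t i] h] /andP [Hc Hi]] : exists e', (c e' != 0) && (inc F e' (tau, i0, false) != 0).
  apply/existsP; apply: contraR H => /existsPn H; rewrite /bd big1 // => e' _.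
  move: (H e'); rewrite negb_and !negbK => /orP [/eqP -> | /eqP ->]; by rewrite ?mul0r ?mulr0.
exists t, i, h; split => //.
case: h Hc Hi => /= Hc Hi.
  right; split => //.
  case: (eqVneq tau t) Hi => [-> Hi|_]; last by rewrite /= !mul0r eqxx.
  split => //.
  case: (eqVneq (val i0) (val i).+1) Hi => [-> | _] Hi; first by left.
  case: (eqVneq i0 i) Hi => [-> | _] Hi; first by right.
  move: Hi.
  by rewrite /= subrr mulr0 eqxx.
left; split => //.
case: (eqVneq i i0) Hi => [-> | _]; last by rewrite /= mul0r eqxx.
rewrite mul1r /facecoef => Hf; split => //.
move: Hf; case E: (sdim t) => [|m]; first by rewrite eqxx.
move=> Hf.
have [j Hj] : exists j : 'I_m.+2, face t j == tau.
  apply/existsP; apply: contraR Hf => /existsPn H2; rewrite big1 // => j _.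
  by rewrite (negbTE (H2 j)) mulr0.
rewrite -(eqP Hj); apply: pf_face; rewrite E //.
by rewrite -ltnS; apply: ltn_ord.
Qed.

Lemma bd_min (F : fieldType) (K : dcomplex) (n : nat) (HK : valid K n) lo (d : nat) p
  (c : cell K n -> F) tau i0 :
  chain_in (subcx K n lo d%:Z) p c -> smin tau = d -> val i0 = d ->
  bd c (tau, i0, false) = 0.
Proof.
move=> Hc Ht Hi; have {}Hi : nat_of_ord i0 = _ := Hi; apply/eqP; apply: contraT => /bd_nz [t [i [h [Hz Hcase]]]].
case: (Hc _ Hz) => Hx _; move: Hx; rewrite /subcx /inK.
case: HK => _ _ _ _ Hpf.
case: Hcase => [[-> [-> Hp]] | [-> [-> Hv]]].
  case: (Hpf _ _ Hp) => h1 _ _ /andP [/andP [h2 _] _]; lia.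
move=> /andP [/andP [h1 h2] /andP [h3 h4]]; rewrite ?vnat in h3 h4; case: Hv => [Hv | Hv].
  have {}Hv : nat_of_ord i0 = (nat_of_ord i).+1 := Hv; lia.
subst i0; rewrite ?vnat in h3 h4; lia.
Qed.

Lemma bd_max (F : fieldType) (K : dcomplex) (n : nat) (HK : valid K n) (b : nat) hi p
  (c : cell K n -> F) tau i0 :
  chain_in (subcx K n b%:Z hi) p c -> smax tau = b -> val i0 = b ->
  bd c (tau, i0, false) = 0.
Proof.
move=> Hc Ht Hi; have {}Hi : nat_of_ord i0 = _ := Hi; apply/eqP; apply: contraT => /bd_nz [t [i [h [Hz Hcase]]]].
case: (Hc _ Hz) => Hx _; move: Hx; rewrite /subcx /inK.
case: HK => _ _ _ _ Hpf.
case: Hcase => [[-> [-> Hp]] | [-> [-> Hv]]].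
  case: (Hpf _ _ Hp) => _ _ h1 /andP [/andP [_ h2] _]; lia.
move=> /andP [/andP [h1 h2] /andP [h3 h4]]; rewrite ?vnat in h3 h4; case: Hv => [Hv | Hv].
  have {}Hv : nat_of_ord i0 = (nat_of_ord i).+1 := Hv; lia.
subst i0; rewrite ?vnat in h3 h4; lia.
Qed.

Arguments bd_min {F K n} HK {lo d p c tau i0}.
Arguments bd_max {F K n} HK {b hi p c tau i0}.
Arguments chain0 {F K n X p c e}.

Theorem lemma5p1 (F : fieldType) (n : nat) (K : dcomplex) (HK : valid K n)
  (hn : (1 <= n)%N) (b d p : nat) (hbd : (b < d)%N) (hdn : (d <= n)%N) :
  (* (1) pair \hat K(b,d] = (\hat K_{-1}^d, \hat K_{-1}^b) *)
  (forall z : cell K n -> F,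
     rel_cycle (subcx K n (-1) d%:Z) (subcx K n (-1) b%:Z) p z ->
     has_vert_min z d ->
     ~ in_image (subcx K n (-1) (d%:Z - 1)) (subcx K n (-1) b%:Z)
                (subcx K n (-1) d%:Z) (subcx K n (-1) b%:Z) p z)
  /\
  (* (2) pair \hat K[b,d) = (\hat K_b^{n+1}, \hat K_d^{n+1}) *)
  (forall z : cell K n -> F,
     rel_cycle (subcx K n b%:Z (n%:Z + 1)) (subcx K n d%:Z (n%:Z + 1)) p z ->
     has_vert_max z b ->
     ~ in_image (subcx K n (b%:Z + 1) (n%:Z + 1)) (subcx K n d%:Z (n%:Z + 1))
                (subcx K n b%:Z (n%:Z + 1)) (subcx K n d%:Z (n%:Z + 1)) p z)
  /\
  (* (3) pair \hat K[b,d] = (\hat K_b^d, empty) *)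
  (forall z : cell K n -> F,
     rel_cycle (subcx K n b%:Z d%:Z) (nocell K n) p z ->
     has_vert_max z b -> has_vert_min z d ->
     ~ in_image (subcx K n (b%:Z + 1) d%:Z) (nocell K n)
                (subcx K n b%:Z d%:Z) (nocell K n) p z
     /\
     ~ in_image (subcx K n b%:Z (d%:Z - 1)) (nocell K n)
                (subcx K n b%:Z d%:Z) (nocell K n) p z).
Proof.
split; [|split].
- move=> z _ [t [i [Hi [Ht Hz]]]] [w [c [a [[Hw _] Hc Ha Heq]]]].
  have {}Hi : nat_of_ord i = d := Hi.
  have w0 : w (t, i, false) = 0.
    apply: (chain0 Hw); rewrite /subcx /=; lia.
  have a0 : a (t, i, false) = 0.
    apply: (chain0 Ha); rewrite /subcx /=; lia.
  by move: Hz; rewrite Heq (bd_min HK Hc Ht Hi) w0 a0 !addr0 eqxx.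
- move=> z _ [t [i [Hi [Ht Hz]]]] [w [c [a [[Hw _] Hc Ha Heq]]]].
  have {}Hi : nat_of_ord i = b := Hi.
  have w0 : w (t, i, false) = 0.
    apply: (chain0 Hw); rewrite /subcx /=; lia.
  have a0 : a (t, i, false) = 0.
    apply: (chain0 Ha); rewrite /subcx /=; lia.
  by move: Hz; rewrite Heq (bd_max HK Hc Ht Hi) w0 a0 !addr0 eqxx.
- move=> z _ [s [i [Hi [Hs Hz]]]] [t [j [Hj [Ht Hz']]]].
  have {}Hi : nat_of_ord i = b := Hi.
  have {}Hj : nat_of_ord j = d := Hj.
  split.
  + move=> [w [c [a [[Hw _] Hc Ha Heq]]]].
    have w0 : w (s, i, false) = 0.
      apply: (chain0 Hw); rewrite /subcx /=; lia.
    have a0 : a (s, i, false) = 0 by apply: (chain0 Ha).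
    by move: Hz; rewrite Heq (bd_max HK Hc Hs Hi) w0 a0 !addr0 eqxx.
  + move=> [w [c [a [[Hw _] Hc Ha Heq]]]].
    have w0 : w (t, j, false) = 0.
      apply: (chain0 Hw); rewrite /subcx /=; lia.
    have a0 : a (t, j, false) = 0 by apply: (chain0 Ha).
    by move: Hz'; rewrite Heq (bd_min HK Hc Ht Hj) w0 a0 !addr0 eqxx.
Qed.
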